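(* Let $k$ be a field, $\Gamma$ a $k$-algebra, $M$ a $\Gamma$-module and $n\geq 1$, with a complex $\mathrm{P}$, maps $\alpha,\beta$, the complex $\mathcal{P}$, the DG-algebra $\mathcal{E}=\mathcal{E}nd_\Gamma(\mathcal{P})$, the element $\sigma$, and the graded spaces ${}^{\sigma}\mathcal{E}$, ${}^{-\sigma}\mathcal{E}$ as in the context. Let $\mathcal{T}$ be the graded vector space whose degree $j$ part consists of pairs $(x,y)$ with $x\in{}^{\sigma}\mathcal{E}^{j}$ and $y\in{}^{-\sigma}\mathcal{E}^{j-n+1}$ (so $\mathcal{T}={}^{\sigma}\mathcal{E}\oplus{}^{-\sigma}\mathcal{E}[1-n]$), with multiplication defined on homogeneous elements by \[(x,y)\cdot(a,b)=\big(x\circ a,\; x\circ b+(-1)^{|a|(|\sigma|+1)}\,y\circ a\big)\] and differential \[\xi(x,y)=\big(\delta(x)-(-1)^{|x|}\,y\circ\sigma,\;\delta(y)\big),\] both extended linearly (here $|x|,|y|,|a|$ are the degrees as elements of $\mathcal{E}$, and $|\sigma|=n$). Then $(\mathcal{T},\cdot,\xi)$ is a DG-algebra (the trivial extension DG-algebra).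
   Context: Modules are right modules. $\Gamma$ is a $k$-algebra, $M$ a $\Gamma$-module, $n\ge 1$. We are given a complex of finitely generated projective $\Gamma$-modules $\mathrm{P}=(0\to P_{n-1}\xrightarrow{d_{n-1}}\cdots\xrightarrow{d_1}P_0\to 0)$, with $P_i$ in cohomological degree $-i$, and maps $\alpha\colon P_0\to M$, $\beta\colon M\to P_{n-1}$ such that $0\to M\xrightarrow{\beta}P_{n-1}\to\cdots\to P_0\xrightarrow{\alpha}M\to 0$ is exact. Put $d_0=\beta\circ\alpha\colon P_0\to P_{n-1}$. Let $\mathcal{P}$ be the complex (a projective resolution of $M$) whose component in degree $-(\ell n+i)$, for $\ell\ge 0$ and $0\le i\le n-1$, is a copy of $P_i$ (''the $\ell$-th copy''), with differential $(-1)^{\ell n}d_i$ from the $\ell$-th copy of $P_i$ to the $\ell$-th copy of $P_{i-1}$ for $i\ge1$, and $(-1)^{\ell n}d_0$ from the $(\ell+1)$-th copy of $P_0$ to the $\ell$-th copy of $P_{n-1}$; all other components are zero. (Thus $\mathcal{P}=\cdots\to\mathrm{P}[2n]\xrightarrow{d_0[n]}\mathrm{P}[n]\xrightarrow{d_0}\mathrm{P}\to0$, where $[1]$ shifts left and negates the differential.) $\mathcal{E}=\mathcal{E}nd_\Gamma(\mathcal{P})$ is the DG endomorphism algebra: $\mathcal{E}^i$ consists of collections of $\Gamma$-maps $\mathcal{P}^j\to\mathcal{P}^{j+i}$ (no compatibility required), multiplication is composition $\circ$, and the differential is $\delta(f)=d_{\mathcal{P}}\circ f-(-1)^{|f|}f\circ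 d_{\mathcal{P}}$. $\sigma\in\mathcal{E}^n$ is the map which is the identity from the $\ell$-th copy of $P_i$ to the $(\ell-1)$-th copy of $P_i$ for all $\ell\ge1$, and zero on the $0$-th copy. Define ${}^{\sigma}\mathcal{E}^i=\{x\in\mathcal{E}^i:\sigma\circ x=(-1)^{|\sigma||x|}x\circ\sigma\}$ and ${}^{-\sigma}\mathcal{E}^i=\{y\in\mathcal{E}^i:\sigma\circ y=(-1)^{|\sigma|(|y|+1)}y\circ\sigma\}$, with ${}^{\pm\sigma}\mathcal{E}=\bigoplus_i{}^{\pm\sigma}\mathcal{E}^i$. *)

(* Defs.v *)
From HB Require Import structures.
From mathcomp Require Import all_boot all_order all_algebra.
Set Implicit Arguments. Unset Strict Implicit. Unset Printing Implicit Defensive.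
Import Order.TTheory GRing.Theory Num.Theory.
Local Open Scope ring_scope.

Record rmodType (k : fieldType) (G : algType k) := RMod {
  rcar : lmodType k;
  ract : rcar -> G -> rcar;
  ractDl : forall x y a, ract (x + y) a = ract x a + ract y a;
  ractDr : forall x a b, ract x (a + b) = ract x a + ract x b;
  ract1 : forall x, ract x 1 = x;
  ractM : forall x a b, ract x (a * b) = ract (ract x a) b;
  ractZ : forall c x a, ract x (c *: a) = c *: ract x a
}.
Arguments rmodType : clear implicits.

Definition ghom (k : fieldType) (G : algType k) (M N : rmodType k G)
  (f : rcar M -> rcar N) : Prop :=
  (forall x y, f (x + y) = f x + f y) /\
  (forall x a, f (ract x a) = ract (f x) a).

(* Finitely generated projective: a direct summand (retract) of a free
   module G^N, the latter being functions 'I_N -> G with the obvious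
   right action. *)
Definition fgproj (k : fieldType) (G : algType k) (P : rmodType k G) : Prop :=
  exists (N : nat) (i : rcar P -> 'I_N -> G) (r : ('I_N -> G) -> rcar P),
    [/\ (forall x y t, i (x + y) t = i x t + i y t),
        (forall x a t, i (ract x a) t = i x t * a),
        (forall v w, r (fun t => v t + w t) = r v + r w),
        (forall v a, r (fun t => v t * a) = ract (r v) a)
      & (forall x, r (i x) = x)].

Definition sgn (k : fieldType) (i : int) : k := (-1) ^+ `|i|%N.

(* Abstract DG-algebra over k, given by its homogeneous elements.      *)
(* hom i u : u is homogeneous of degree i.  mul i j u v is the product *)
(* of u (degree i) and v (degree j); dif i u the differential of u of  *)
(* degree i.                                                           *)
Record is_dg_algebra (k : fieldType) (X : Type) (hom : int -> X -> Prop)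
  (zero : X) (add : X -> X -> X) (scale : k -> X -> X)
  (mul : int -> int -> X -> X -> X) (one : X) (dif : int -> X -> X) : Prop := {
  dga_hom0 : forall i, hom i zero;
  dga_homD : forall i u v, hom i u -> hom i v -> hom i (add u v);
  dga_homZ : forall i c u, hom i u -> hom i (scale c u);
  dga_mul_hom : forall i j u v, hom i u -> hom j v -> hom (i + j) (mul i j u v);
  dga_mul_linl : forall i j c u u' v, hom i u -> hom i u' -> hom j v ->
     mul i j (add (scale c u) u') v = add (scale c (mul i j u v)) (mul i j u' v);
  dga_mul_linr : forall i j c u v v', hom i u -> hom j v -> hom j v' ->
     mul i j u (add (scale c v) v') = add (scale c (mul i j u v)) (mul i j u v');
  dga_mulA : forall i j l u v w, hom i u -> hom j v -> hom l w ->
     mul (i + j) l (mul i j u v) w = mul i (j + l) u (mul j l v w);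
  dga_one_hom : hom 0 one;
  dga_mul1 : forall j u, hom j u -> mul 0 j one u = u;
  dga_mulr1 : forall i u, hom i u -> mul i 0 u one = u;
  dga_dif_hom : forall i u, hom i u -> hom (i + 1) (dif i u);
  dga_dif_lin : forall i c u u', hom i u -> hom i u' ->
     dif i (add (scale c u) u') = add (scale c (dif i u)) (dif i u');
  dga_dif_dif : forall i u, hom i u -> dif (i + 1) (dif i u) = zero;
  dga_leibniz : forall i j u v, hom i u -> hom j v ->
     dif (i + j) (mul i j u v) =
     add (mul (i + 1) j (dif i u) v) (scale (sgn k i) (mul i (j + 1) u (dif j v)))
}.

Unset Implicit Arguments.
Section Construction.
Context {k : fieldType} {G : algType k}.
Context (M : rmodType k G) (n : nat) (P : nat -> rmodType k G)
  (d : forall i, rcar (P i.+1) -> rcar (P i))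
  (alpha : rcar (P 0%N) -> rcar M) (beta : rcar M -> rcar (P n.-1)).

(* kernel of the map going out of P_i in the sequence
   0 -> M -> P_{n-1} -> ... -> P_0 -> M -> 0   (d_i for i >= 1, alpha for i = 0) *)
Definition kerout (i : nat) : rcar (P i) -> Prop :=
  match i as i0 return rcar (P i0) -> Prop with
  | 0 => fun p => alpha p = 0
  | j.+1 => fun p => d j p = 0
  end.

(* transport between P_a and P_b (identity if a = b, zero otherwise) *)
Definition cQ (a b : nat) (x : rcar (P a)) : rcar (P b) :=
  match @eqP _ a b with
  | ReflectT e => ecast t (rcar (P t)) e x
  | ReflectF _ => 0
  end.

(* The complex \mathcal{P}: its component in cohomological degree -m
   (m : nat, m = l n + i) is the l-th copy of P_i, i = m %% n, l = m %/ n.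
   Components in positive degree are zero and are omitted. *)
Definition Pc (m : nat) : lmodType k := rcar (P (m %% n)).

(* Elements of \mathcal{E}: collections of maps Pc m -> Pc m'.
   f is in E^i iff each f m m' is a G-map and f m m' = 0 unless
   -m' = -m + i. *)
Definition Emap := forall m m' : nat, Pc m -> Pc m'.

Definition zeroE : Emap := fun m m' _ => 0.
Definition addE (f g : Emap) : Emap := fun m m' x => f m m' x + g m m' x.
Definition scaleE (c : k) (f : Emap) : Emap := fun m m' x => c *: f m m' x.

Definition inE (i : int) (f : Emap) : Prop :=
  (forall m m', ghom (M := P (m %% n)) (N := P (m' %% n)) (f m m')) /\
  (forall m m' x, m%:Z != m'%:Z + i -> f m m' x = 0).

(* composition f o g, where g has degree b *)
Definition compE (b : int) (f g : Emap) : Emap := fun m m'' x =>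
  match (m%:Z - b) with
  | Posz m' => f m' m'' (g m m' x)
  | Negz _ => 0
  end.

Definition idE : Emap := fun m m' x =>
  if m == m' then cQ (m %% n) (m' %% n) x else 0.

Definition Dm (m' : nat) (x : Pc m'.+1) : Pc m' :=
  (-1) ^+ (m' %/ n * n)%N *:
   (if ((m' %% n).+1 < n)%N then d (m' %% n) (cQ (m'.+1 %% n) (m' %% n).+1 x)
    else cQ n.-1 (m' %% n) (beta (alpha (cQ (m'.+1 %% n) 0%N x)))).

Definition dPE : Emap := fun m m' x =>
  if m == m'.+1 then Dm m' (cQ (m %% n) (m'.+1 %% n) x) else 0.

Definition sigmaE : Emap := fun m m' x =>
  if m == (m' + n)%N then cQ (m %% n) (m' %% n) x else 0.

Definition deltaE (i : int) (f : Emap) : Emap :=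
  addE (compE i dPE f) (scaleE (- sgn k i) (compE 1 f dPE)).

Definition inSE (i : int) (x : Emap) : Prop :=
  inE i x /\ compE i sigmaE x = scaleE (sgn k (n%:Z * i)) (compE n%:Z x sigmaE).

Definition inASE (i : int) (y : Emap) : Prop :=
  inE i y /\ compE i sigmaE y = scaleE (sgn k (n%:Z * (i + 1))) (compE n%:Z y sigmaE).

Definition Tel := (Emap * Emap)%type.

Definition inT (j : int) (u : Tel) : Prop :=
  inSE j u.1 /\ inASE (j - n%:Z + 1) u.2.

Definition zeroT : Tel := (zeroE, zeroE).
Definition addT (u v : Tel) : Tel := (addE u.1 v.1, addE u.2 v.2).
Definition scaleT (c : k) (u : Tel) : Tel := (scaleE c u.1, scaleE c u.2).
Definition oneT : Tel := (idE, zeroE).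

(* (x,y).(a,b) = (x a, x b + (-1)^{|a|(n+1)} y a), with |a| = j, |b| = j-n+1 *)
Definition mulT (i j : int) (u v : Tel) : Tel :=
  (compE j u.1 v.1,
   addE (compE (j - n%:Z + 1) u.1 v.2)
        (scaleE (sgn k (j * (n%:Z + 1))) (compE j u.2 v.1))).

(* xi(x,y) = (delta x - (-1)^{|x|} y sigma, delta y), with |x| = i, |y| = i-n+1 *)
Definition xiT (i : int) (u : Tel) : Tel :=
  (addE (deltaE i u.1) (scaleE (- sgn k i) (compE n%:Z u.2 sigmaE)),
   deltaE (i - n%:Z + 1) u.2).

End Construction.

(* Main.v *)
Require Import Defs.
From HB Require Import structures.
From mathcomp Require Import all_boot all_order all_algebra.
From mathcomp Require Import ring lra zify.
From Stdlib Require Import FunctionalExtensionality.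
Import GRing.Theory Num.Theory.
Local Open Scope ring_scope.
Set Implicit Arguments. Unset Strict Implicit. Unset Printing Implicit Defensive.

Section Signs.
Variable k : fieldType.

Lemma sgnE (i : int) : sgn k i = (-1) ^ i.
Proof. by case: i => [m|m]; rewrite /sgn //= -invr_sign. Qed.

Lemma sgnD i j : sgn k (i + j) = sgn k i * sgn k j.
Proof. by rewrite !sgnE expfzDr // oppr_eq0 oner_eq0. Qed.

Lemma sgn0 : sgn k 0 = 1. Proof. by []. Qed.
Lemma sgn1 : sgn k 1 = -1. Proof. by rewrite /sgn /= expr1. Qed.


Lemma sgn_sq i : sgn k i * sgn k i = 1.
Proof. by rewrite /sgn -exprD addnn -mul2n exprM sqrrN expr1n expr1n. Qed.

Lemma sgn_par A B z : A = B + z * 2 -> sgn k A = sgn k B.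
Proof.
move=> ->; rewrite sgnD.
have -> : z * 2 = z + z by ring.
by rewrite sgnD sgn_sq mulr1.
Qed.

Lemma sgn_mul_sq i : sgn k (i * i) = sgn k i.
Proof.
rewrite /sgn abszM.
by rewrite -[LHS]signr_odd -[RHS]signr_odd oddM andbb.
Qed.

Lemma sgnN i : sgn k (- i) = sgn k i.
Proof. by rewrite /sgn abszN. Qed.

End Signs.

Set Implicit Arguments. Unset Strict Implicit. Unset Printing Implicit Defensive.

Section Mod.
Variables (k : fieldType) (G : algType k).

Lemma ract0 (R : rmodType k G) a : ract (0 : rcar R) a = 0.
Proof.
have h := ractDl (0 : rcar R) 0 a; rewrite addr0 in h.
by apply: (addrI (ract (0 : rcar R) a)); rewrite -h addr0.
Qed.

Lemma ractZl (R : rmodType k G) c (x : rcar R) a : ract (c *: x) a = c *: ract x a.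
Proof.
have -> : c *: x = ract x (c *: 1) by rewrite ractZ ract1.
by rewrite -ractM -scalerAl mul1r ractZ.
Qed.

Lemma ghom0 (R S : rmodType k G) (f : rcar R -> rcar S) : ghom f -> f 0 = 0.
Proof.
case=> hD _; have h := hD 0 0; rewrite addr0 in h.
by apply: (addrI (f 0)); rewrite -h addr0.
Qed.

Lemma ghomZ (R S : rmodType k G) (f : rcar R -> rcar S) c x : ghom f -> f (c *: x) = c *: f x.
Proof.
case=> hD hR.
have -> : c *: x = ract x (c *: 1) by rewrite ractZ ract1.
by rewrite hR ractZ ract1.
Qed.

Lemma ghomD (R S : rmodType k G) (f : rcar R -> rcar S) x y : ghom f -> f (x + y) = f x + f y.
Proof. by case. Qed.

Lemma ghom_zero (R S : rmodType k G) : ghom (fun _ : rcar R => (0 : rcar S)).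
Proof. by split=> *; rewrite ?addr0 ?ract0. Qed.

Lemma ghom_comp (R S T : rmodType k G) (f : rcar S -> rcar T) (g : rcar R -> rcar S) :
  ghom f -> ghom g -> ghom (fun x => f (g x)).
Proof. by case=> f1 f2 [g1 g2]; split=> *; rewrite ?f1 ?g1 ?f2 ?g2. Qed.

Lemma ghom_add (R S : rmodType k G) (f g : rcar R -> rcar S) :
  ghom f -> ghom g -> ghom (fun x => f x + g x).
Proof. by case=> f1 f2 [g1 g2]; split=> *; rewrite ?f1 ?g1 ?f2 ?g2 ?ractDl // addrACA. Qed.

Lemma ghom_scale (R S : rmodType k G) (f : rcar R -> rcar S) c :
  ghom f -> ghom (fun x => c *: f x).
Proof. by case=> f1 f2; split=> *; rewrite ?f1 ?f2 ?ractZl // scalerDr. Qed.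

End Mod.

Section Q.
Variables (k : fieldType) (G : algType k) (P : nat -> rmodType k G).

Lemma cQ_id a (x : rcar (P a)) : cQ P a a x = x.
Proof. by rewrite /cQ; case: eqP => // e; rewrite (eq_axiomK e). Qed.

Lemma cQ_ghom a b : ghom (M := P a) (N := P b) (cQ P a b).
Proof.
rewrite /cQ; case: eqP => [e|_]; last exact: ghom_zero.
case: b / e; split=> //.
Qed.

Lemma cQ_nat (F : forall a b, rcar (P b) -> rcar (P a)) a a' b b' :
  a = a' -> b = b' -> forall x, cQ P a a' (F a b x) = F a' b' (cQ P b b' x).
Proof. by move=> <- <- x; rewrite !cQ_id. Qed.

Lemma cQ_comp a b c (x : rcar (P a)) : a = b -> cQ P b c (cQ P a b x) = cQ P a c x.
Proof. by move=> e; subst; rewrite cQ_id. Qed.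

End Q.

Set Implicit Arguments. Unset Strict Implicit. Unset Printing Implicit Defensive.

Section EAlg.
Variables (k : fieldType) (G : algType k) (n : nat) (P : nat -> rmodType k G).
Local Notation E := (Emap n P).
Local Notation comp := (compE n P).
Local Notation addE := (addE n P).
Local Notation inDeg := (Defs.inE n P).
Local Notation scaleE := (scaleE n P).

Definition isg (f : E) := forall m m', ghom (M := P (m %% n)) (N := P (m' %% n)) (f m m').

Lemma Eext (f g : E) : (forall m m' x, f m m' x = g m m' x) -> f = g.
Proof.
move=> h; apply: functional_extensionality_dep => m.
apply: functional_extensionality_dep => m'; apply: functional_extensionality => x; exact: h.
Qed.

Lemma comp_addl b (f f' g : E) : comp b (addE f f') g = addE (comp b f g) (comp b f' g).
Proof. by apply: Eext => m m' x; rewrite /compE /addE; case: (_ - _) => // _; rewrite addr0. Qed.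

Lemma comp_scalel b c (f g : E) : comp b (scaleE c f) g = scaleE c (comp b f g).
Proof. by apply: Eext => m m' x; rewrite /compE /scaleE; case: (_ - _) => // _; rewrite scaler0. Qed.

Lemma comp_addr b (f g g' : E) : isg f -> comp b f (addE g g') = addE (comp b f g) (comp b f g').
Proof.
move=> hf; apply: Eext => m m' x; rewrite /compE /addE; case: (_ - _) => [p|_].
  exact: ghomD. by rewrite addr0.
Qed.

Lemma comp_scaler b c (f g : E) : isg f -> comp b f (scaleE c g) = scaleE c (comp b f g).
Proof.
move=> hf; apply: Eext => m m' x; rewrite /compE /scaleE; case: (_ - _) => [p|_].
  exact: ghomZ. by rewrite scaler0.
Qed.

Lemma comp_0l b (g : E) : comp b (zeroE n P) g = zeroE n P.
Proof. by apply: Eext => m m' x; rewrite /compE /zeroE; case: (_ - _). Qed.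

Lemma comp_0r b (f : E) : isg f -> comp b f (zeroE n P) = zeroE n P.
Proof. move=> hf; apply: Eext => m m' x; rewrite /compE /zeroE; case: (_ - _) => // p. exact: (ghom0 (hf p m')). Qed.

Lemma comp_assoc b c (f g h : E) : isg f ->
  comp c (comp b f g) h = comp (b + c) f (comp c g h).
Proof.
move=> hf; apply: Eext => m m'' x; rewrite /compE.
have -> : m%:Z - (b + c) = (m%:Z - c) - b by ring.
case: (m%:Z - c) => [p|p] //.
by case: (Negz p - b) => // q; rewrite (ghom0 (hf q m'')).
Qed.

Lemma isg_comp b (f g : E) : isg f -> isg g -> isg (comp b f g).
Proof.
move=> hf hg m m'; rewrite /compE; case: (_ - _) => [p|p].
  exact: ghom_comp. exact: ghom_zero.
Qed.

Lemma isg_add (f g : E) : isg f -> isg g -> isg (addE f g).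
Proof. by move=> hf hg m m'; apply: ghom_add. Qed.

Lemma isg_scale c (f : E) : isg f -> isg (scaleE c f).
Proof. by move=> hf m m'; apply: ghom_scale. Qed.

Lemma isg_zero : isg (zeroE n P).
Proof. by move=> m m'; apply: ghom_zero. Qed.

Lemma inE_isg i (f : E) : inDeg i f -> isg f.
Proof. by case. Qed.

Lemma inE_comp i j (f g : E) : inDeg i f -> inDeg j g -> inDeg (i + j) (comp j f g).
Proof.
move=> [hf df] [hg dg]; split; first exact: isg_comp.
move=> m m'' x ne; rewrite /compE.
case E1: (m%:Z - j) => [p|p]//.
have [e|ne2] := eqVneq (m%:Z) (p%:Z + j).
  rewrite df ?ghom0 //; apply/eqP => e2; move/eqP: ne; apply; lia.
by rewrite dg // ghom0.
Qed.

Lemma inE_add i (f g : E) : inDeg i f -> inDeg i g -> inDeg i (addE f g).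
Proof.
move=> [hf df] [hg dg]; split; first exact: isg_add.
by move=> m m' x ne; rewrite /addE df // dg // addr0.
Qed.

Lemma inE_scale i c (f : E) : inDeg i f -> inDeg i (scaleE c f).
Proof.
move=> [hf df]; split; first exact: isg_scale.
by move=> m m' x ne; rewrite /scaleE df // scaler0.
Qed.

Lemma inE_zero i : inDeg i (zeroE n P).
Proof. by split; [exact: isg_zero | by []]. Qed.

Lemma comp_id_l j (f : E) : inDeg j f -> comp j (idE n P) f = f.
Proof.
move=> [hf df]; apply: Eext => m m'' x; rewrite /compE /idE.
case E1: (m%:Z - j) => [p|p].
  case: eqP => [e|ne]; first by subst; rewrite cQ_id.
  rewrite df //; apply/eqP => e; apply: ne; lia.
rewrite df //; apply/eqP => e; lia.
Qed.

Lemma comp_id_r (f : E) : isg f -> comp 0 f (idE n P) = f.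
Proof. by move=> hf; apply: Eext => m m'' x; rewrite /compE subr0 /idE eqxx cQ_id. Qed.

Lemma inE_id : inDeg 0 (idE n P).
Proof.
split.
  move=> m m'; rewrite /idE; case: eqP => [e|_]; [exact: cQ_ghom | exact: ghom_zero].
move=> m m' x ne; rewrite /idE; case: eqP => // e; subst; move: ne; by rewrite addr0 eqxx.
Qed.

Lemma scale1E (f : E) : scaleE 1 f = f.
Proof. by apply: Eext => *; rewrite /scaleE scale1r. Qed.

Lemma scaleEA a b (f : E) : scaleE a (scaleE b f) = scaleE (a * b) f.
Proof. by apply: Eext => *; rewrite /scaleE scalerA. Qed.

Lemma addEC (f g : E) : addE f g = addE g f.
Proof. by apply: Eext => *; rewrite /addE addrC. Qed.

Lemma addEA (f g h : E) : addE f (addE g h) = addE (addE f g) h.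
Proof. by apply: Eext => *; rewrite /addE addrA. Qed.

Lemma add0E (f : E) : addE (zeroE n P) f = f.
Proof. by apply: Eext => *; rewrite /addE /zeroE add0r. Qed.

Lemma scaleE0 c : scaleE c (zeroE n P) = zeroE n P.
Proof. by apply: Eext => *; rewrite /scaleE /zeroE scaler0. Qed.

Lemma scaleDE a (f g : E) : scaleE a (addE f g) = addE (scaleE a f) (scaleE a g).
Proof. by apply: Eext => *; rewrite /scaleE /addE scalerDr. Qed.

End EAlg.

Unset Implicit Arguments.

Section DP.
Variables (k : fieldType) (G : algType k) (M : rmodType k G) (n : nat) (P : nat -> rmodType k G)
  (d : forall i, rcar (P i.+1) -> rcar (P i))
  (alpha : rcar (P 0%N) -> rcar M) (beta : rcar M -> rcar (P n.-1)).
Hypothesis n_gt0 : (0 < n)%N.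
Hypothesis hd : forall i, (i.+1 < n)%N -> ghom (M := P i.+1) (N := P i) (d i).
Hypothesis halpha : ghom alpha.
Hypothesis hbeta : ghom beta.
Hypothesis exb : forall p : rcar (P n.-1), kerout M P d alpha _ p <-> exists m, beta m = p.
Hypothesis exd : forall i, (i.+1 < n)%N -> forall p : rcar (P i),
      kerout M P d alpha _ p <-> exists q : rcar (P i.+1), d i q = p.

Local Notation E := (Emap n P).
Local Notation comp := (compE n P).
Local Notation addE := (addE n P).
Local Notation scaleE := (scaleE n P).
Local Notation inDeg := (Defs.inE n P).
Local Notation dP := (dPE M n P d alpha beta).
Local Notation sig := (sigmaE n P).

Definition D0 (a b : nat) (x : rcar (P b)) : rcar (P a) :=
  if (a.+1 < n)%N then d a (cQ P b a.+1 x)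
  else cQ P n.-1 a (beta (alpha (cQ P b 0 x))).

Lemma DmE m (x : Pc n P m.+1) :
  Dm M n P d alpha beta m x = (-1) ^+ (m %/ n * n)%N *: D0 (m %% n) (m.+1 %% n) x.
Proof. by []. Qed.

Definition succ a := if (a.+1 < n)%N then a.+1 else 0%N.

Lemma modS m : (m.+1 %% n = succ (m %% n))%N.
Proof.
rewrite /succ -addn1 -modnDml addn1; case: ifP => h; first by rewrite modn_small.
have : (m %% n < n)%N by rewrite ltn_pmod.
rewrite leq_eqVlt h orbF => /eqP ->; exact: modnn.
Qed.

Lemma D0_ghom a b : ghom (M := P b) (N := P a) (D0 a b).
Proof.
case h: (a.+1 < n)%N; rewrite /D0 h.
  apply: ghom_comp; [exact: (hd _ h) | exact: cQ_ghom].
apply: ghom_comp; first exact: cQ_ghom.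
apply: ghom_comp; first exact: hbeta.
apply: ghom_comp; first exact: halpha.
exact: cQ_ghom.
Qed.

Lemma D0_D0 a b c (y : rcar (P c)) : (a < n)%N -> b = succ a -> c = succ b ->
  D0 a b (D0 b c y) = 0.
Proof.
move=> ha eb ec.
case h1: (a.+1 < n)%N.
  have {}eb : b = a.+1 by rewrite eb /succ h1.
  subst b; rewrite /D0 h1 cQ_id.
  case h2: (a.+2 < n)%N.
    have {}ec : c = a.+2 by rewrite ec /succ h2.
    subst c; rewrite ?h2 cQ_id; apply/(exd _ h2); by exists y.
  have {}ec : c = 0%N by rewrite ec /succ h2.
  subst c; rewrite ?h2.
  have key : forall (c : nat) (p : rcar (P c)), c = a.+1 -> kerout M P d alpha c p ->
      d a (cQ P c a.+1 p) = 0.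
    by move=> c p e; subst c => /=; rewrite cQ_id.
  apply: key; first lia.
  apply/exb; by eexists.
have {}eb : b = 0%N by rewrite eb /succ h1.
subst b.
have key : forall (c0 : nat) (p : rcar (P c0)), c0 = 0%N -> kerout M P d alpha c0 p ->
    alpha (cQ P c0 0 p) = 0.
  by move=> c0 p e; subst c0 => /=; rewrite cQ_id.
rewrite /D0 h1 cQ_id.
suff -> : alpha (D0 0 c y) = 0 by rewrite (ghom0 hbeta) (ghom0 (cQ_ghom _ _ _)).
case h2: (1 < n)%N.
  have {}ec : c = 1%N by rewrite ec /succ h2.
  subst c; rewrite /D0 h2 cQ_id; apply/(exd _ h2); by exists y.
have {}ec : c = 0%N by rewrite ec /succ h2.
subst c; rewrite /D0 h2.
apply: key; first lia.
apply/exb; by eexists.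
Qed.

Lemma comp_at b (f g : E) m p m'' x : m%:Z - b = p%:Z -> comp b f g m m'' x = f p m'' (g m p x).
Proof. by rewrite /compE => ->. Qed.

Lemma comp_neg b (f g : E) m m'' x : m%:Z - b < 0 -> comp b f g m m'' x = 0.
Proof. by rewrite /compE; case: (_ - _). Qed.

Lemma dP_isg : isg dP.
Proof.
move=> m m'; rewrite /dPE; case: eqP => _; last exact: ghom_zero.
exact: (ghom_scale _ (ghom_comp (D0_ghom _ _) (cQ_ghom P _ _))).
Qed.

Lemma dP_in : inDeg 1 dP.
Proof.
split; first exact: dP_isg.
move=> m m' x ne; rewrite /dPE; case: eqP => // e; subst; exfalso; move/eqP: ne; apply; lia.
Qed.

Lemma sig_isg : isg sig.
Proof.
move=> m m'; rewrite /sigmaE; case: eqP => _; [exact: cQ_ghom | exact: ghom_zero].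
Qed.

Lemma sig_in : inDeg n%:Z sig.
Proof.
split; first exact: sig_isg.
move=> m m' x ne; rewrite /sigmaE; case: eqP => // e; subst; exfalso; move/eqP: ne; apply; lia.
Qed.

Lemma dPdP : comp 1 dP dP = zeroE n P.
Proof.
apply: Eext => m m'' x; case: m x => [|p] x.
  by rewrite (@comp_neg 1 dP dP 0%N m'' x).
rewrite (@comp_at _ _ _ _ p); last lia.
rewrite {2}/dPE eqxx cQ_id /dPE; case: eqP => // e; subst p.
rewrite cQ_id !DmE (ghomZ _ _ (D0_ghom _ _)) scalerA.
rewrite (D0_D0 _ _ _ _ (ltn_pmod _ n_gt0)) ?scaler0 // modS //.
Qed.

Lemma sd_comm : comp 1 sig dP = scaleE (sgn k (n%:Z * 1)) (comp n%:Z dP sig).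
Proof.
apply: Eext => m m'' x.
have [e|ne] := eqVneq m (m'' + n).+1; last first.
  have [_ h1] := inE_comp sig_in dP_in.
  have [_ h2] := inE_comp dP_in sig_in.
  rewrite /scaleE h1 ?h2 ?scaler0 //; apply/eqP => e; move/eqP: ne; apply; lia.
subst m.
rewrite (@comp_at _ _ _ _ (m'' + n)%N); last lia.
rewrite /scaleE (@comp_at _ _ _ _ m''.+1); last lia.
rewrite /dPE /sigmaE. have e1 : (m''.+1 + n)%N = (m'' + n).+1 by []. rewrite e1 !eqxx !cQ_id !DmE (ghomZ _ _ (cQ_ghom _ _ _)).
rewrite (@cQ_nat _ _ _ D0 _ (m'' %% n) _ (m''.+1 %% n)); last first.
- by rewrite -addSn modnDr.
- by rewrite modnDr.
rewrite scalerA; congr (_ *: _).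
rewrite divnDr ?dvdnn // divnn n_gt0 mulnDl mul1n exprD mulrC /sgn mulr1.
by [].
Qed.

End DP.

Unset Implicit Arguments.

Section LM.
Variable (k : fieldType) (V : lmodType k).
Lemma lmA (X Y Z : V) (a b : k) : X + (-(a*b)) *: Z = X + (-a) *: Y + a *: (Y + (-b) *: Z).
Proof.
rewrite scalerDr scalerA mulrN -addrA; congr (X + _).
by rewrite addrA !scaleNr addNr add0r.
Qed.
End LM.

Section Delta.
Variables (k : fieldType) (G : algType k) (M : rmodType k G) (n : nat) (P : nat -> rmodType k G)
  (d : forall i, rcar (P i.+1) -> rcar (P i))
  (alpha : rcar (P 0%N) -> rcar M) (beta : rcar M -> rcar (P n.-1)).
Hypothesis n_gt0 : (0 < n)%N.
Hypothesis hd : forall i, (i.+1 < n)%N -> ghom (M := P i.+1) (N := P i) (d i).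
Hypothesis halpha : ghom alpha.
Hypothesis hbeta : ghom beta.
Hypothesis exb : forall p : rcar (P n.-1), kerout M P d alpha _ p <-> exists m, beta m = p.
Hypothesis exd : forall i, (i.+1 < n)%N -> forall p : rcar (P i),
      kerout M P d alpha _ p <-> exists q : rcar (P i.+1), d i q = p.

Local Notation E := (Emap n P).
Local Notation comp := (compE n P).
Local Notation addE := (addE n P).
Local Notation scaleE := (scaleE n P).
Local Notation zeroE := (zeroE n P).
Local Notation inDeg := (Defs.inE n P).
Local Notation dP := (dPE M n P d alpha beta).
Local Notation sig := (sigmaE n P).
Local Notation delta := (deltaE M n P d alpha beta).

Let dPi : isg dP. Proof. by apply: dP_isg. Qed.
Let dPin : inDeg 1 dP. Proof. by apply: dP_in. Qed.
Let sigi : isg sig. Proof. by apply: sig_isg. Qed.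
Let sigin : inDeg n%:Z sig. Proof. by apply: sig_in. Qed.
Let dPdP' : comp 1 dP dP = zeroE. Proof. by apply: dPdP. Qed.
Let sdc : comp 1 sig dP = scaleE (sgn k (n%:Z * 1)) (comp n%:Z dP sig). Proof. by apply: sd_comm. Qed.

Lemma delta_in i f : inDeg i f -> inDeg (i + 1) (delta i f).
Proof.
move=> hf; apply: inE_add.
  by have := inE_comp dPin hf; rewrite addrC.
by apply: inE_scale; exact: inE_comp hf dPin.
Qed.

Lemma delta_isg i f : isg f -> isg (delta i f).
Proof.
move=> hf; apply: isg_add; first exact: isg_comp.
by apply: isg_scale; exact: isg_comp.
Qed.

Lemma delta_add i f g : isg f -> isg g -> delta i (addE f g) = addE (delta i f) (delta i g).
Proof.
move=> hf hg; rewrite /deltaE comp_addr // comp_addl.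
by apply: Eext => m m' x; rewrite /addE /scaleE scalerDr addrACA.
Qed.

Lemma delta_scale i c f : isg f -> delta i (scaleE c f) = scaleE c (delta i f).
Proof.
move=> hf; rewrite /deltaE comp_scaler // comp_scalel.
by apply: Eext => m m' x; rewrite /addE /scaleE scalerDr !scalerA mulrC.
Qed.

Lemma delta_comp a b f g : isg f -> isg g ->
  delta (a + b) (comp b f g) =
  addE (comp b (delta a f) g) (scaleE (sgn k a) (comp (b + 1) f (delta b g))).
Proof.
move=> hf hg; rewrite /deltaE.
rewrite -(comp_assoc a b f g dPi) (comp_assoc b 1 g dP hf).
rewrite comp_addl comp_scalel (comp_assoc 1 b dP g hf) [1 + b]addrC.
rewrite comp_addr // comp_scaler //.
apply: Eext => m m' x; rewrite /addE /scaleE sgnD.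
by rewrite -lmA.
Qed.

Lemma delta_sq i f : isg f -> delta (i + 1) (delta i f) = zeroE.
Proof.
move=> hf; rewrite /deltaE comp_addr // comp_scaler //.
rewrite comp_addl comp_scalel.
have -> : comp (i + 1) dP (comp i dP f) = zeroE.
  by rewrite addrC -(comp_assoc 1 i dP f dPi) dPdP' comp_0l.
rewrite (comp_assoc 1 1 dP dP hf) dPdP' comp_0r //.
rewrite (comp_assoc i 1 f dP dPi).
apply: Eext => m m' x; rewrite /addE /scaleE /zeroE sgnD sgn1.
rewrite !scaler0 add0r addr0 mulrN1 opprK.
by rewrite scaleNr addNr.
Qed.

Lemma delta_sig : delta n%:Z sig = zeroE.
Proof.
rewrite /deltaE sdc; apply: Eext => m m' x; rewrite /addE /scaleE /zeroE scalerA mulr1.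
by rewrite mulNr sgn_sq scaleN1r addrN.
Qed.

Definition comm (s : k) (i : int) (x : E) := comp i sig x = scaleE s (comp n%:Z x sig).

Lemma comm_add s i x y : comm s i x -> comm s i y -> comm s i (addE x y).
Proof. by rewrite /comm => hx hy; rewrite comp_addr // hx hy comp_addl scaleDE. Qed.

Lemma comm_scale s i c x : comm s i x -> comm s i (scaleE c x).
Proof. by rewrite /comm => hx; rewrite comp_scaler // hx comp_scalel !scaleEA mulrC. Qed.

Lemma comm_zero s i : comm s i zeroE.
Proof. by rewrite /comm comp_0r // comp_0l scaleE0. Qed.

Lemma comm_comp s t i j x a : isg x -> comm s i x -> comm t j a -> comm (s * t) (i + j) (comp j x a).
Proof.
rewrite /comm => hx cx ca.
rewrite -(comp_assoc i j x a sigi) cx comp_scalel (comp_assoc n%:Z j sig a hx) ca.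
by rewrite comp_scaler // scaleEA (comp_assoc j n%:Z a sig hx) addrC.
Qed.

Lemma comm_compsig s i y : comm s i y -> comm s (i + n%:Z) (comp n%:Z y sig).
Proof.
rewrite /comm => cy.
by rewrite -(comp_assoc i n%:Z y sig sigi) cy comp_scalel.
Qed.

Lemma comm_eq s s' i i' x : comm s i x -> s = s' -> i = i' -> comm s' i' x.
Proof. by move=> h <- <-. Qed.

Lemma comm_delta s i x : isg x -> comm s i x -> comm (s * sgn k (n%:Z * 1)) (i + 1) (delta i x).
Proof.
move=> hx cx; apply: comm_add.
  apply: (comm_eq _ _ _ _ _ (comm_comp _ _ _ _ _ _ dPi sdc cx)); [exact: mulrC | exact: addrC].
by apply: comm_scale; exact: (comm_comp _ _ _ _ _ _ hx cx sdc).
Qed.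

End Delta.

Unset Implicit Arguments.

Section LM2.
Variable (k : fieldType) (V : lmodType k).

Lemma lmB (A A' B B' : V) c t : (c*:A + A') + t*:(c*:B + B') = c*:(A + t*:B) + (A' + t*:B').
Proof. by rewrite !scalerDr !scalerA [t * c]mulrC addrACA. Qed.

Lemma lmC (A B C : V) tl tj : A + tl*:(B + tj*:C) = (A + tl*:B) + (tj*tl)*:C.
Proof. by rewrite scalerDr scalerA addrA [tl * tj]mulrC. Qed.

Lemma lmD (D1 D2 Q1 Q2 : V) si sj sij tj snj : sij = si*sj -> sij*tj = si*snj ->
  (D1 + si*:D2) + (-sij)*:(Q1 + tj*:Q2) = (D1 + (-si)*:(snj*:Q2)) + si*:(D2 + (-sj)*:Q1).
Proof.
move=> h1 h2; rewrite !scalerDr !scalerA !mulNr mulrN h2 -h1.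
set X := si *: D2; set Y := (- sij) *: Q1; set Z := (- (si * snj)) *: Q2.
rewrite -!addrA; congr (_ + _).
by rewrite [RHS]addrC -addrA.
Qed.

Lemma lmE (C1 C2 C3 C4 R : V) si tj s' tj1 sj sb : tj*s' = si*tj1 -> sb = -(tj1*sj) ->
  (C1 + si*:C2) + tj*:(C3 + s'*:C4) =
  ((C1 + (-si)*:(sb*:R)) + tj*:C3) + si*:(C2 + tj1*:(C4 + (-sj)*:R)).
Proof.
move=> h1 ->; rewrite !scalerDr !scalerA h1.
have -> : (si * tj1 * - sj) *: R = - ((- si * - (tj1 * sj)) *: R).
  by rewrite -scaleNr; congr (_ *: _); ring.
set r := (- si * - (tj1 * sj)) *: R.
set a := si *: C2; set b := tj *: C3; set c := (si * tj1) *: C4.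
rewrite -!addrA; congr (_ + _).
rewrite [RHS]addrCA [r + (a + _)]addrCA [r + (c - r)]addrC subrK addrCA.
by [].
Qed.

Lemma sgn_nn (z : int) : sgn k (z * z + - z) = 1.
Proof. by rewrite sgnD sgnN sgn_mul_sq sgn_sq. Qed.

End LM2.

Unset Implicit Arguments.

Arguments comm_eq : default implicits.
Arguments comm_comp : default implicits.
Arguments comm_add : default implicits.
Arguments comm_scale : default implicits.
Arguments comm_compsig : default implicits.

Section Main.
Variables (k : fieldType) (G : algType k) (M : rmodType k G) (n : nat) (P : nat -> rmodType k G)
  (d : forall i, rcar (P i.+1) -> rcar (P i))
  (alpha : rcar (P 0%N) -> rcar M) (beta : rcar M -> rcar (P n.-1)).
Hypothesis n_gt0 : (0 < n)%N.
Hypothesis hd : forall i, (i.+1 < n)%N -> ghom (M := P i.+1) (N := P i) (d i).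
Hypothesis halpha : ghom alpha.
Hypothesis hbeta : ghom beta.
Hypothesis exb : forall p : rcar (P n.-1), kerout M P d alpha _ p <-> exists m, beta m = p.
Hypothesis exd : forall i, (i.+1 < n)%N -> forall p : rcar (P i),
      kerout M P d alpha _ p <-> exists q : rcar (P i.+1), d i q = p.

Local Notation E := (Emap n P).
Local Notation comp := (compE n P).
Local Notation addE := (addE n P).
Local Notation scaleE := (scaleE n P).
Local Notation zeroE := (zeroE n P).
Local Notation inDeg := (Defs.inE n P).
Local Notation dP := (dPE M n P d alpha beta).
Local Notation sig := (sigmaE n P).
Local Notation delta := (deltaE M n P d alpha beta).
Local Notation comm := (comm n P).
Local Notation hom := (inT n P).
Local Notation N := (n%:Z).

Let delta_in' := delta_in k G M n P d alpha beta n_gt0 hd halpha hbeta.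
Let delta_isg' := delta_isg k G M n P d alpha beta hd halpha hbeta.
Let delta_add' := delta_add k G M n P d alpha beta hd halpha hbeta.
Let delta_scale' := delta_scale k G M n P d alpha beta hd halpha hbeta.
Let delta_comp' := delta_comp k G M n P d alpha beta hd halpha hbeta.
Let delta_sq' := delta_sq k G M n P d alpha beta n_gt0 hd halpha hbeta exb exd.
Let delta_sig' := delta_sig k G M n P d alpha beta n_gt0 hd halpha hbeta.
Let comm_delta' := comm_delta k G M n P d alpha beta n_gt0 hd halpha hbeta.
Let sigi : isg sig. Proof. by apply: sig_isg. Qed.
Let sigin : inDeg n%:Z sig. Proof. by apply: sig_in. Qed.

Lemma inE_eq {i i'} {f : E} : inDeg i f -> i = i' -> inDeg i' f.
Proof. by move=> h <-. Qed.

Lemma addE0 (f : E) : addE f zeroE = f.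
Proof. by rewrite addEC add0E. Qed.

Ltac pw := apply: Eext => ? ? ?; rewrite /addE /scaleE /zeroE.

Lemma hom0 i : hom i (zeroT n P).
Proof. by split; split; [exact: inE_zero | exact: comm_zero | exact: inE_zero | exact: comm_zero]. Qed.

Lemma homD i u v : hom i u -> hom i v -> hom i (addT n P u v).
Proof.
case: u => x y; case: v => a b [[hx cx] [hy cy]] [[ha ca] [hb cb]].
split; split; rewrite /=.
- exact: inE_add.
- exact: comm_add.
- exact: inE_add.
- exact: comm_add.
Qed.

Lemma homZ i c u : hom i u -> hom i (scaleT n P c u).
Proof.
case: u => x y [[hx cx] [hy cy]].
split; split; rewrite /=.
- exact: inE_scale.
- exact: comm_scale.
- exact: inE_scale.
- exact: comm_scale.
Qed.

Lemma mul_hom i j u v : hom i u -> hom j v -> hom (i + j) (mulT n P i j u v).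
Proof.
case: u => x y; case: v => a b [[hx cx] [hy cy]] [[ha ca] [hb cb]].
split; split; rewrite /=.
- exact: inE_comp.
- apply: (comm_eq (comm_comp (inE_isg hx) cx ca)) => //.
  by rewrite -sgnD mulrDr.
- apply: inE_add.
    apply: (inE_eq (inE_comp hx hb)); ring.
  apply: inE_scale; apply: (inE_eq (inE_comp hy ha)); ring.
- apply: comm_add.
    apply: (comm_eq (comm_comp (inE_isg hx) cx cb)).
      by rewrite -sgnD; congr sgn; ring.
    ring.
  apply: comm_scale.
  apply: (comm_eq (comm_comp (inE_isg hy) cy ca)).
    by rewrite -sgnD; congr sgn; ring.
  ring.
Qed.


Lemma mul_linl i j c u u' v : hom i u -> hom i u' -> hom j v ->
  mulT n P i j (addT n P (scaleT n P c u) u') v =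
  addT n P (scaleT n P c (mulT n P i j u v)) (mulT n P i j u' v).
Proof.
case: u => x y; case: u' => x' y'; case: v => a b _ _ _.
rewrite /mulT /addT /scaleT /=; congr pair.
  by rewrite comp_addl comp_scalel.
rewrite !comp_addl !comp_scalel; pw; exact: lmB.
Qed.

Lemma mul_linr i j c u v v' : hom i u -> hom j v -> hom j v' ->
  mulT n P i j u (addT n P (scaleT n P c v) v') =
  addT n P (scaleT n P c (mulT n P i j u v)) (mulT n P i j u v').
Proof.
case: u => x y; case: v => a b; case: v' => a' b' [[hx _] [hy _]] _ _.
have xg := inE_isg hx; have yg := inE_isg hy.
rewrite /mulT /addT /scaleT /=; congr pair.
  by rewrite comp_addr // comp_scaler.
rewrite !comp_addr // !comp_scaler //; pw; exact: lmB.
Qed.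

Lemma mulA i j l u v w : hom i u -> hom j v -> hom l w ->
  mulT n P (i + j) l (mulT n P i j u v) w = mulT n P i (j + l) u (mulT n P j l v w).
Proof.
case: u => x y; case: v => a b; case: w => c e [[hx _] [hy _]] _ _.
have xg := inE_isg hx; have yg := inE_isg hy.
rewrite /mulT /=; congr pair.
  by rewrite (comp_assoc j l a c xg).
rewrite comp_addl comp_scalel (comp_assoc (j - N + 1) l b c xg) (comp_assoc j l a c yg).
rewrite (comp_assoc j (l - N + 1) a e xg) comp_addr // comp_scaler //.
rewrite (_ : j + (l - N + 1) = j + l - N + 1); last ring.
rewrite (_ : j - N + 1 + l = j + l - N + 1); last ring.
rewrite mulrDl sgnD; pw; exact: lmC.
Qed.

Lemma one_hom : hom 0 (oneT n P).
Proof.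
split; split; rewrite /=.
- exact: inE_id.
- by rewrite mulr0 sgn0 scale1E comp_id_r // comp_id_l.
- exact: inE_zero.
- exact: comm_zero.
Qed.

Lemma mul_1 j u : hom j u -> mulT n P 0 j (oneT n P) u = u.
Proof.
case: u => x y [[hx _] [hy _]].
rewrite /mulT /oneT /= comp_id_l // comp_id_l // comp_0l scaleE0 addE0.
by [].
Qed.

Lemma mul_r1 i u : hom i u -> mulT n P i 0 u (oneT n P) = u.
Proof.
case: u => x y [[hx _] [hy _]].
rewrite /mulT /oneT /= comp_id_r; last exact: inE_isg hx.
rewrite comp_0r; last exact: inE_isg hx.
by rewrite mul0r sgn0 scale1E comp_id_r ?add0E //; exact: inE_isg hy.
Qed.


Lemma sgn_shift i : sgn k (N * (i - N + 1 + 1)) = sgn k (N * (i + 1)).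
Proof.
rewrite (_ : N * (i - N + 1 + 1) = N * (i + 1) + (N + - (N * N))); last ring.
rewrite sgnD (_ : N + - (N * N) = - (N * N + - N)); last ring.
by rewrite sgnN sgn_nn mulr1.
Qed.

Lemma dif_hom i u : hom i u -> hom (i + 1) (xiT M n P d alpha beta i u).
Proof.
case: u => x y [[hx cx] [hy cy]].
have xg := inE_isg hx; have yg := inE_isg hy.
split; split; rewrite /=.
- apply: inE_add; first exact: delta_in'.
  apply: inE_scale; apply: (inE_eq (inE_comp hy sigin)); ring.
- apply: comm_add.
    apply: (comm_eq (comm_delta' _ _ _ xg cx)) => //.
    by rewrite -sgnD -mulrDr.
  apply: comm_scale; apply: (comm_eq (comm_compsig cy)).
    exact: sgn_shift.
  ring.
- apply: (inE_eq (delta_in' _ _ hy)); ring.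
- apply: (comm_eq (comm_delta' _ _ _ yg cy)).
    by rewrite -sgnD; congr sgn; ring.
  ring.
Qed.

Lemma dif_lin i c u u' : hom i u -> hom i u' ->
  xiT M n P d alpha beta i (addT n P (scaleT n P c u) u') =
  addT n P (scaleT n P c (xiT M n P d alpha beta i u)) (xiT M n P d alpha beta i u').
Proof.
case: u => x y; case: u' => x' y' [[hx _] [hy _]] [[hx' _] [hy' _]].
have xg := inE_isg hx; have yg := inE_isg hy.
have xg' := inE_isg hx'; have yg' := inE_isg hy'.
rewrite /xiT /addT /scaleT /=; congr pair.
  rewrite delta_add' ?delta_scale' //; last exact: isg_scale.
  rewrite comp_addl comp_scalel; pw; exact: lmB.
by rewrite delta_add' ?delta_scale' //; exact: isg_scale.
Qed.

Lemma dif_dif i u : hom i u ->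
  xiT M n P d alpha beta (i + 1) (xiT M n P d alpha beta i u) = zeroT n P.
Proof.
case: u => x y [[hx _] [hy _]].
have xg := inE_isg hx; have yg := inE_isg hy.
rewrite /xiT /zeroT /=; congr pair; last first.
  rewrite (_ : i + 1 - N + 1 = i - N + 1 + 1); last ring.
  exact: delta_sq'.
rewrite delta_add'; first last.
- by apply: isg_scale; apply: isg_comp.
- exact: delta_isg'.
rewrite delta_scale'; last exact: isg_comp.
rewrite delta_sq' // add0E.
have -> : delta (i + 1) (comp N y sig) = comp N (delta (i - N + 1) y) sig.
  rewrite (_ : i + 1 = i - N + 1 + N); last ring.
  by rewrite delta_comp' // delta_sig' comp_0r // scaleE0 addE0.
pw; rewrite sgnD sgn1 mulrN1 opprK.
by rewrite scaleNr addNr.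
Qed.


Lemma sgn_eb j : sgn k (N * (j - N + 1 + 1)) = - (sgn k ((j + 1) * (N + 1)) * sgn k j).
Proof.
rewrite -sgnD.
have -> : forall X, - sgn k X = sgn k (X + 1) by move=> X; rewrite sgnD sgn1 mulrN1.
rewrite (_ : (j + 1) * (N + 1) + j + 1 = N * (j - N + 1 + 1) + (N * N + - N) + (j + 1) * 2); last ring.
by rewrite (sgn_par k (z := j + 1) erefl) sgnD sgn_nn mulr1.
Qed.

Lemma leibniz i j u v : hom i u -> hom j v ->
  xiT M n P d alpha beta (i + j) (mulT n P i j u v) =
  addT n P (mulT n P (i + 1) j (xiT M n P d alpha beta i u) v)
    (scaleT n P (sgn k i) (mulT n P i (j + 1) u (xiT M n P d alpha beta j v))).
Proof.
case: u => x y; case: v => a b [[hx cx] [hy cy]] [[ha ca] [hb cb]].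
have xg := inE_isg hx; have yg := inE_isg hy.
have ag := inE_isg ha; have bg := inE_isg hb.
rewrite /xiT /mulT /addT /scaleT /=; congr pair.
  rewrite delta_comp' // !comp_addl !comp_scalel.
  rewrite (comp_assoc (j - N + 1) N b sig xg) (comp_assoc j N a sig yg).
  rewrite (comp_assoc N j sig a yg) ca comp_scaler //.
  rewrite comp_addr // comp_scaler //.
  rewrite (_ : j - N + 1 + N = j + 1); last ring.
  rewrite [N + j]addrC.
  pw; apply: lmD; first exact: sgnD.
  rewrite -!sgnD; apply: (sgn_par k (z := j)); ring.
rewrite delta_add'; first last.
- by apply: isg_scale; apply: isg_comp.
- exact: isg_comp.
rewrite delta_scale'; last exact: isg_comp.
have e1 := delta_comp' i (j - N + 1) x b xg bg.
rewrite (_ : i + (j - N + 1) = i + j - N + 1) in e1; last ring.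
have e2 := delta_comp' (i - N + 1) j y a yg ag.
rewrite (_ : i - N + 1 + j = i + j - N + 1) in e2; last ring.
rewrite e1 e2 !comp_addl !comp_scalel.
rewrite (comp_assoc N (j - N + 1) sig b yg) cb comp_scaler //.
rewrite comp_addr // comp_scaler //.
rewrite (_ : N + (j - N + 1) = j + 1); last ring.
rewrite (_ : j + 1 - N + 1 = j - N + 1 + 1); last ring.
pw; apply: lmE; last exact: sgn_eb.
rewrite -!sgnD; apply: (sgn_par k (z := - N)); ring.
Qed.


Lemma dga : is_dg_algebra (inT n P) (zeroT n P) (addT n P)
    (scaleT n P) (mulT n P) (oneT n P) (xiT M n P d alpha beta).
Proof.
constructor.
- exact: hom0.
- exact: homD.
- exact: homZ.
- exact: mul_hom.
- exact: mul_linl.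
- exact: mul_linr.
- exact: mulA.
- exact: one_hom.
- exact: mul_1.
- exact: mul_r1.
- exact: dif_hom.
- exact: dif_lin.
- exact: dif_dif.
- exact: leibniz.
Qed.

End Main.

Theorem proposition2p13 (k : fieldType) (G : algType k) (M : rmodType k G)
  (n : nat) (P : nat -> rmodType k G)
  (d : forall i, rcar (P i.+1) -> rcar (P i))
  (alpha : rcar (P 0%N) -> rcar M) (beta : rcar M -> rcar (P n.-1)) :
  (0 < n)%N ->
  (forall i, (i < n)%N -> fgproj (P i)) ->
  (forall i, (i.+1 < n)%N -> ghom (M := P i.+1) (N := P i) (d i)) ->
  ghom alpha -> ghom beta ->
  (* exactness of 0 -> M -> P_{n-1} -> ... -> P_0 -> M -> 0 *)
  (forall m, beta m = 0 -> m = 0) ->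
  (forall p : rcar (P n.-1), kerout M P d alpha _ p <-> exists m, beta m = p) ->
  (forall i, (i.+1 < n)%N -> forall p : rcar (P i),
      kerout M P d alpha _ p <-> exists q : rcar (P i.+1), d i q = p) ->
  (forall x : rcar M, exists p, alpha p = x) ->
  is_dg_algebra (inT n P) (zeroT n P) (addT n P)
    (scaleT n P) (mulT n P) (oneT n P) (xiT M n P d alpha beta).
Proof.
move=> n_gt0 _ hd ha hb _ exb exd _.
by apply: dga.
Qed.
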